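(* Under the standing assumption, let $S$ be a small tile with center $s$ and let $T$ be a big tile with center $s+t$ that properly touches $S$. Then the tiling contains a big tile with center $s-t$.
   Context: Standing assumption: let $n\ge 2$ and $0<p<q$ be real numbers. A tiling of $\mathbb{R}^n$ is a family of closed sets (tiles) whose union is $\mathbb{R}^n$ and whose pairwise intersections have Lebesgue measure zero. There are an invertible real $n\times n$ matrix $B$, an axis-parallel closed cube $S_0$ of side length $p$ and an axis-parallel closed cube $T_0$ of side length $q$ such that the family $\{S_0+Bz: z\in\mathbb{Z}^n\}\cup\{T_0+Bz: z\in\mathbb{Z}^n\}$ is a tiling of $\mathbb{R}^n$, and this tiling is unilateral, i.e. no two distinct tiles of the same side length share a full facet. Tiles of side length $p$ are called small, tiles of side length $q$ big. Two tiles touch if they intersect; they properly touch if their intersection has positive $(n-1)$-dimensional Lebesgue measure. *)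

(* Defs.v *)
From HB Require Import structures.
From mathcomp Require Import all_boot all_order all_algebra.
From mathcomp Require Import boolp classical_sets reals.
Set Implicit Arguments. Unset Strict Implicit. Unset Printing Implicit Defensive.
Import Order.TTheory GRing.Theory Num.Theory.
Local Open Scope ring_scope.
Local Open Scope classical_set_scope.

Section Tiles.
Variables (R : realType) (n : nat).

Definition cube (a : 'cV[R]_n) (l : R) : set 'cV[R]_n :=
  [set x | forall i : 'I_n, a i 0 <= x i 0 <= a i 0 + l].

Definition cube_center (a : 'cV[R]_n) (l : R) : 'cV[R]_n := a + const_mx (l / 2).

(* the intersection of two axis-parallel cubes is the box whose i-th side
   is [max (a i) (a' i), min (a i + l) (a' i + l')]; inter_len is its length
   (negative when the intersection is empty) *)
Definition inter_len (a : 'cV[R]_n) (l : R) (a' : 'cV[R]_n) (l' : R) (i : 'I_n) : R :=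
  Num.min (a i 0 + l) (a' i 0 + l') - Num.max (a i 0) (a' i 0).

(* n-dimensional Lebesgue measure of  cube a l `&` cube a' l'  *)
Definition inter_volume (a : 'cV[R]_n) (l : R) (a' : 'cV[R]_n) (l' : R) : R :=
  \prod_(i < n) Num.max 0 (inter_len a l a' l' i).

(* the intersection has positive (n-1)-dimensional Lebesgue (Hausdorff)
   measure: it is a nonempty box with at most one degenerate side *)
Definition properly_touch (a : 'cV[R]_n) (l : R) (a' : 'cV[R]_n) (l' : R) : Prop :=
  (forall i, 0 <= inter_len a l a' l' i) /\
  (forall i j, inter_len a l a' l' i = 0 -> inter_len a l a' l' j = 0 -> i = j).

Definition facet (a : 'cV[R]_n) (l : R) (i : 'I_n) (u : bool) : set 'cV[R]_n :=
  [set x | cube a l x /\ x i 0 = a i 0 + (if u then l else 0)].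

Definition share_full_facet (a : 'cV[R]_n) (l : R) (a' : 'cV[R]_n) (l' : R) : Prop :=
  exists i u i' u', facet a l i u = facet a' l' i' u'.

Definition is_tiling (I : Type) (c : I -> 'cV[R]_n) (s : I -> R) : Prop :=
  (forall x, exists k, cube (c k) (s k) x) /\
  (forall k k', cube (c k) (s k) <> cube (c k') (s k') ->
     inter_volume (c k) (s k) (c k') (s k') = 0).

Definition unilateral (I : Type) (c : I -> 'cV[R]_n) (s : I -> R) : Prop :=
  forall k k', s k = s k' -> cube (c k) (s k) <> cube (c k') (s k') ->
    ~ share_full_facet (c k) (s k) (c k') (s k').

Definition lat (B : 'M[R]_n) (z : 'cV[int]_n) : 'cV[R]_n :=
  B *m map_mx (fun k : int => k%:~R) z.

(* the family {S0 + Bz} u {T0 + Bz}: index (false, z) is the small tile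
   S0 + Bz (side p), index (true, z) the big tile T0 + Bz (side q) *)
Definition two_corner (B : 'M[R]_n) (S0 T0 : 'cV[R]_n) (k : bool * 'cV[int]_n)
  : 'cV[R]_n := (if k.1 then T0 else S0) + lat B k.2.

Definition two_side (p q : R) (k : bool * 'cV[int]_n) : R := if k.1 then q else p.

End Tiles.

(* Main.v *)
Require Import Defs.
From HB Require Import structures.
From mathcomp Require Import all_boot all_order all_algebra.
From mathcomp Require Import boolp classical_sets reals.
From mathcomp Require Import lra.
Import Order.TTheory GRing.Theory Num.Theory.
Local Open Scope ring_scope.

Section H.
Context {R : realType}.
Implicit Types a l b m x A q : R.

Lemma minmax_pos (a l b m x : R) : 0 < l -> a <= x <= a + l -> b < x < b + m ->
  0 < Num.min (a + l) (b + m) - Num.max a b.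
Proof.
move=> hl /andP[h1 h2] /andP[h3 h4].
rewrite minEle maxEle; case: (lerP (a + l) (b + m)) => H1; case: (lerP a b) => H2; lra.
Qed.

Lemma minmax_le (A A' q : R) :
  Num.max 0 (Num.min (A + q) (A' + q) - Num.max A A') = 0 -> A + q <= A' \/ A' + q <= A.
Proof.
rewrite minEle (maxEle A).
case: (lerP (A + q) (A' + q)) => H1; case: (lerP A A') => H2; rewrite maxEle;
 [case: (lerP 0 (A + q - A')) | case: (lerP 0 (A + q - A)) | case: (lerP 0 (A' + q - A')) | case: (lerP 0 (A' + q - A))] => H3 E; lra.
Qed.
End H.
Section H2.
Context {R : realType} {n : nat}.

Lemma latD (B : 'M[R]_n) (u v : 'cV[int]_n) : lat B (u + v) = lat B u + lat B v.
Proof.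
rewrite /lat -mulmxDr; congr (_ *m _); apply/matrixP => i j; rewrite !mxE intrD //.
Qed.

Lemma latN (B : 'M[R]_n) (u : 'cV[int]_n) : lat B (- u) = - lat B u.
Proof.
rewrite /lat -mulmxN; congr (_ *m _); apply/matrixP => i j; rewrite !mxE intrN //.
Qed.

Lemma cube_eq_corner (a a' : 'cV[R]_n) l l' : 0 <= l -> 0 <= l' ->
  cube a l = cube a' l' -> forall i, a i 0 = a' i 0 /\ a i 0 + l = a' i 0 + l'.
Proof.
move=> hl hl' E i.
have Ha : cube a l a by move=> k; apply/andP; split; lra.
have Ha' : cube a' l' a' by move=> k; apply/andP; split; lra.
have Hu : cube a l (a + const_mx l) by move=> k; rewrite !mxE; apply/andP; split; lra.
have Hu' : cube a' l' (a' + const_mx l') by move=> k; rewrite !mxE; apply/andP; split; lra.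
rewrite E in Ha Hu. rewrite -E in Ha' Hu'.
move: (Ha i) (Ha' i) (Hu i) (Hu' i); rewrite !mxE => /andP[h1 h2] /andP[h3 h4] /andP[h5 h6] /andP[h7 h8].
split; lra.
Qed.

Lemma ivol_pos (a a' x : 'cV[R]_n) l l' : 0 < l ->
  (forall i, a i 0 <= x i 0 <= a i 0 + l) -> (forall i, a' i 0 < x i 0 < a' i 0 + l') ->
  inter_volume a l a' l' != 0.
Proof.
move=> hl H1 H2; rewrite /inter_volume; apply/prodf_neq0 => i _.
have Hp := @minmax_pos R _ _ _ _ _ hl (H1 i) (H2 i).
apply/negP => /eqP E.
have : inter_len a l a' l' i <= Num.max 0 (inter_len a l a' l' i) by rewrite le_max lexx orbT.
rewrite E /inter_len; lra.
Qed.
End H2.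


Ltac fin := repeat match goal with
  | H : is_true (_ < _) |- _ => revert H
  | H : is_true (_ <= _) |- _ => revert H
  | H : _ \/ _ |- _ => revert H
  end; repeat match goal with x := _ |- _ => match goal with |- context [x] => unfold x end end; rewrite ?mxE; intros; lra.

Theorem lemma5 (R : realType) (n : nat) (p q : R) (B : 'M[R]_n) (S0 T0 : 'cV[R]_n) :
  (2 <= n)%N -> 0 < p -> p < q -> B \in unitmx ->
  is_tiling (two_corner B S0 T0) (two_side p q) ->
  unilateral (two_corner B S0 T0) (two_side p q) ->
  forall zS zT : 'cV[int]_n,
    let s := cube_center (S0 + lat B zS) p in
    let t := cube_center (T0 + lat B zT) q - s in
    properly_touch (S0 + lat B zS) p (T0 + lat B zT) q ->
    exists z : 'cV[int]_n, cube_center (T0 + lat B z) q = s - t.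
Proof.
move=> hn hp hpq _ [Hcov Hdisj] _ zS zT s t _.
rewrite /t /s; clear t s.
have LD := @latD R n B; have LN := @latN R n B.
move: LD LN Hcov Hdisj; rewrite /two_corner.
move: (lat B) => L latD latN Hcov Hdisj.
have hq : 0 < q by fin.
pose i0 : 'I_n := Ordinal (ltnW hn).
have BS : forall (zb zs : 'cV[int]_n) (x : 'cV[R]_n),
  (forall i, (T0 + L zb) i 0 <= x i 0 <= (T0 + L zb) i 0 + q) ->
  (forall i, (S0 + L zs) i 0 < x i 0 < (S0 + L zs) i 0 + p) -> False.
{ move=> zb zs x H1 H2.
  have := Hdisj (true, zb) (false, zs); rewrite /two_corner /two_side /= => H.
  have /eqP := @ivol_pos R n _ _ _ _ _ hq H1 H2; apply; apply: H => E.
  have [h1 h2] := @cube_eq_corner R n _ _ _ _ (ltW hq) (ltW hp) E i0. lra. }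
have BB : forall (z1 z2 : 'cV[int]_n),
  ~ (forall i, L z1 i 0 = L z2 i 0) ->
  exists i, L z1 i 0 + q <= L z2 i 0 \/ L z2 i 0 + q <= L z1 i 0.
{ move=> z1 z2 Hne.
  have := Hdisj (true, z1) (true, z2); rewrite /two_corner /two_side /= => H.
  have : inter_volume (T0 + L z1) q (T0 + L z2) q = 0.
    apply: H => E; apply: Hne => i.
    have [h1 _] := @cube_eq_corner R n _ _ _ _ (ltW hq) (ltW hq) E i. move: h1; rewrite !mxE. fin.
  rewrite /inter_volume => /eqP /prodf_eq0 [i _ /eqP Hi].
  exists i; move: Hi; rewrite /inter_len !mxE => /minmax_le [h|h]; [left|right]; fin. }
pose cv (i : 'I_n) := (T0 + L zT) i 0 + q / 2.
pose sv (i : 'I_n) := (S0 + L zS) i 0 + p / 2.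
pose xs : 'cV[R]_n := \matrix_(i, j) (2 * cv i - sv i).
have [[b z] Hz] := Hcov xs.
move: Hz; rewrite /two_corner /two_side /=.
case: b => /= Hz.
{ exfalso.
  apply: (BS (zT + zT - z) zS (\matrix_(i, j) sv i)).
  - move=> i; move: (Hz i); rewrite /xs /cv /sv !latD latN !mxE => /andP[h1 h2].
    apply/andP; split; fin.
  - move=> i; rewrite /sv !mxE; apply/andP; split; fin. }
have Hcorner : forall i, (S0 + L z) i 0 = 2 * cv i - sv i - p / 2.
{ move=> j.
  have Claim : forall wj : R,
      2 * cv j - (S0 + L z) j 0 - p < wj < 2 * cv j - (S0 + L z) j 0 ->
      (wj < (S0 + L zS) j 0 \/ (S0 + L zS) j 0 + p < wj) ->
      sv j - (q - p / 2) < wj < sv j + (q - p / 2) -> False.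
  { move=> wj /andP[hw1 hw2] hout /andP[hw3 hw4].
    pose w : 'cV[R]_n := \matrix_(i, k)
      (if i == j then wj else 2 * cv i - (S0 + L z) i 0 - p / 2).
    have [[b' z'] Hw] := Hcov w.
    move: Hw; rewrite /two_corner /two_side /=.
    case: b' => /= Hw.
    - apply: (BS (zT + zT - z') z (\matrix_(i, k) (2 * cv i - w i 0))).
      + move=> i; move: (Hw i); rewrite /cv !latD latN !mxE => /andP[h1 h2].
        apply/andP; split; fin.
      + move=> i; rewrite !mxE; case: (i =P j) => [->|_]; apply/andP; split; rewrite /cv; fin.
    - have Hne : ~ (forall i, L z' i 0 = L zS i 0).
      { move=> E; move: (Hw j); rewrite /w !mxE eqxx E => /andP[h1 h2].
        case: hout; fin. }
      have [i Hi] := BB z' zS Hne.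
      have Hwi : sv i - (q - p / 2) < w i 0 < sv i + (q - p / 2).
      { rewrite /w mxE; case: eqP => [->|_]; first by apply/andP; split.
        move: (Hz i); rewrite /xs /sv /cv !mxE => /andP[h1 h2].
        apply/andP; split; fin. }
      move: Hwi (Hw i); rewrite /sv !mxE => /andP[h1 h2] /andP[h3 h4].
      case: Hi => h5; fin. }
  move: (Hz j); rewrite /xs !mxE => /andP[hz1 hz2].
  case: (ltrgtP (S0 j 0 + L z j 0) (2 * cv j - sv j - p / 2)) => [hd|hd|hd]; last exact: hd; exfalso.
  - have [et [he1 [he2 he3]]] : exists et : R,
        0 < et /\ et < 2 * cv j - sv j - p / 2 - (S0 + L z) j 0 /\ et < q - p.
    { have [h|h] := lerP (2 * cv j - sv j - p / 2 - (S0 + L z) j 0) (q - p);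
        [exists ((2 * cv j - sv j - p / 2 - (S0 + L z) j 0) / 2) | exists ((q - p) / 2)]; (split; [fin | split; fin]). }
    apply: (Claim (sv j + p / 2 + et)).
    + apply/andP; split; fin.
    + right; rewrite /sv; fin.
    + apply/andP; split; fin.
  - have [et [he1 [he2 he3]]] : exists et : R,
        0 < et /\ et < (S0 + L z) j 0 - (2 * cv j - sv j - p / 2) /\ et < q - p.
    { have [h|h] := lerP ((S0 + L z) j 0 - (2 * cv j - sv j - p / 2)) (q - p);
        [exists (((S0 + L z) j 0 - (2 * cv j - sv j - p / 2)) / 2) | exists ((q - p) / 2)]; (split; [fin | split; fin]). }
    apply: (Claim (sv j - p / 2 - et)).
    + apply/andP; split; fin.
    + left; rewrite /sv; fin.
    + apply/andP; split; fin. }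
exists (zT - z + zS).
apply/matrixP => i k; rewrite (ord1 k).
move: (Hcorner i); rewrite /cube_center /cv /sv !latD latN !mxE => h.
fin.
Qed.
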